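(* Let $\zeta\in G\setminus\{0\}$ and let $f,g:G\times G\to\mathbb{C}$ be functions such that $L_aL_b=f(a,b)L_{a+b}+g(a,b)L_{a+b+\zeta}$ ($a,b\in G$) defines a CLSAS on $\mathcal{W}$. Suppose that there exist $\gamma\in\mathbb{C}$ and $\lambda\in G$ with $\gamma\neq\lambda$ such that $f(a,b)=\lambda+b$ whenever $\lambda+a+b\neq0$ and $f(a,b)=\frac{(\lambda+b)(\gamma-\lambda-b)}{\gamma-\lambda}$ whenever $\lambda+a+b=0$. Then $g(a,b)=0$ for all $a,b\in G$.
   Context: $G$ is a free (additive) subgroup of $\mathbb{C}$ of rank $\nu>1$. The high rank Witt algebra $\mathcal{W}$ has basis $\{L_a\mid a\in G\}$ and bracket $[L_a,L_b]=(b-a)L_{a+b}$. A left-symmetric algebra is a complex vector space with bilinear product satisfying $(xy)z-x(yz)=(yx)z-y(xz)$; a compatible left-symmetric algebraic structure (CLSAS) on a Lie algebra $\mathfrak g$ is such a product on $\mathfrak g$ with $xy-yx=[x,y]$. *)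

(* Defs.v *)
(* The base field C is modelled as an arbitrary
   numClosedFieldType (the complex numbers are one instance). *)
From HB Require Import structures.
From mathcomp Require Import all_boot all_order all_algebra.
Set Implicit Arguments. Unset Strict Implicit. Unset Printing Implicit Defensive.
Import Order.TTheory GRing.Theory Num.Theory.
Local Open Scope ring_scope.

Section Witt.
Variable C : numClosedFieldType.

Definition free_subgroup_of_rank (G : C -> Prop) (nu : nat) : Prop :=
  exists e : 'I_nu -> C,
    (forall z : 'I_nu -> int, \sum_(i < nu) e i *~ z i = 0 -> forall i, z i = 0)
    /\ (forall x, G x <-> exists z : 'I_nu -> int, x = \sum_(i < nu) e i *~ z i).

(* Elements of the vector space with basis {L_a | a in G}: finite formal
   sums  sum_k c_k L_{a_k}, encoded as a list of pairs (c_k, a_k). *)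
Definition fsum := seq (C * C).

Definition inW (G : C -> Prop) (u : fsum) : Prop := forall p, p \in u -> G p.2.

Definition coef (u : fsum) (x : C) : C := \sum_(p <- u | p.2 == x) p.1.

Definition eqW (u v : fsum) : Prop := forall x, coef u x = coef v x.

Definition scaleW (k : C) (u : fsum) : fsum := [seq (k * p.1, p.2) | p <- u].
Definition addW (u v : fsum) : fsum := u ++ v.
Definition subW (u v : fsum) : fsum := u ++ scaleW (-1) v.

(* bilinear extension of a product given on basis elements:
   prod a b = L_a L_b as a formal sum *)
Definition mulW (prod : C -> C -> fsum) (u v : fsum) : fsum :=
  flatten [seq scaleW (p.1 * q.1) (prod p.2 q.2) | p <- u, q <- v].

Definition witt_bracket (a b : C) : fsum := [:: (b - a, a + b)].

Definition lsprod (f g : C -> C -> C) (zeta : C) (a b : C) : fsum :=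
  [:: (f a b, a + b); (g a b, a + b + zeta)].

(* prod (bilinearly extended) is a compatible left-symmetric algebraic
   structure on the Lie algebra with bracket br, on the span of {L_a | a in G} *)
Definition is_CLSAS (G : C -> Prop) (br prod : C -> C -> fsum) : Prop :=
  (forall u v w, inW G u -> inW G v -> inW G w ->
     eqW (subW (mulW prod (mulW prod u v) w) (mulW prod u (mulW prod v w)))
         (subW (mulW prod (mulW prod v u) w) (mulW prod v (mulW prod u w))))
  /\ (forall u v, inW G u -> inW G v ->
     eqW (subW (mulW prod u v) (mulW prod v u)) (mulW br u v)).

End Witt.

(* Main.v *)
Require Import Defs.
From HB Require Import structures.
From mathcomp Require Import all_boot all_order all_algebra.
From mathcomp Require Import ring.
Import Order.TTheory GRing.Theory Num.Theory.
Set Implicit Arguments. Unset Strict Implicit.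
Local Open Scope ring_scope.

Lemma neq_k (C : numClosedFieldType) (z u v k : C) :
  k != 0 -> z != 0 -> u - v = k * z -> (u == v) = false.
Proof.
move=> k0 z0 e; apply/negbTE; rewrite -subr_eq0 e mulf_neq0 //.
Qed.

Lemma two_neq0 (C : numClosedFieldType) : (2 : C) != 0.
Proof. by rewrite pnatr_eq0. Qed.

Ltac decide_eq z :=
  repeat match goal with
  | |- context [ (?u == ?v) ] =>
      first [ have -> : (u == v) = true by apply/eqP; ring
            | have -> : (u == v) = false by apply: (@neq_k _ z u v 1) => //; [exact: oner_neq0|ring]
            | have -> : (u == v) = false by apply: (@neq_k _ z u v (-1)) => //; [by rewrite oppr_eq0 oner_neq0|ring]
            | have -> : (u == v) = false by apply: (@neq_k _ z u v 2) => //; [exact: two_neq0|ring]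
            | have -> : (u == v) = false by apply: (@neq_k _ z u v (-2)) => //; [by rewrite oppr_eq0 two_neq0|ring] ]
  end.

Lemma inW1 (C : numClosedFieldType) (G : C -> Prop) a : G a -> inW G [:: (1, a)].
Proof. by move=> Ga p; rewrite inE => /eqP ->. Qed.

Lemma Sz (C : numClosedFieldType) (G : C -> Prop) (f g : C -> C -> C) z :
  z != 0 -> is_CLSAS G (@witt_bracket C) (lsprod f g z) ->
  forall a b c, G a -> G b -> G c ->
 f a b * g (a+b) c + g a b * f (a+b+z) c - (f b c * g a (b+c) + g b c * f a (b+c+z))
 = f b a * g (b+a) c + g b a * f (b+a+z) c - (f a c * g b (a+c) + g a c * f b (a+c+z)).
Proof.
move=> z0 [H _] a b c Ga Gb Gc.
have := H _ _ _ (inW1 Ga) (inW1 Gb) (inW1 Gc) (a+b+c+z).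
rewrite /subW /mulW /= /scaleW /= /coef !big_cons !big_nil /=.
decide_eq z.
move=> E; apply/eqP; rewrite -subr_eq0; apply/eqP; move/eqP: E; rewrite -subr_eq0 => /eqP <-.
ring.
Qed.

Lemma Qz (C : numClosedFieldType) (G : C -> Prop) (f g : C -> C -> C) z :
  z != 0 -> is_CLSAS G (@witt_bracket C) (lsprod f g z) ->
  forall a b c, G a -> G b -> G c ->
  g a b * g (a+b+z) c - g b c * g a (b+c+z) = g b a * g (b+a+z) c - g a c * g b (a+c+z).
Proof.
move=> z0 [H _] a b c Ga Gb Gc.
have := H _ _ _ (inW1 Ga) (inW1 Gb) (inW1 Gc) (a+b+c+z+z).
rewrite /subW /mulW /= /scaleW /= /coef !big_cons !big_nil /=.
decide_eq z.
move=> E; apply/eqP; rewrite -subr_eq0; apply/eqP; move/eqP: E; rewrite -subr_eq0 => /eqP <-.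
ring.
Qed.

Lemma Symz (C : numClosedFieldType) (G : C -> Prop) (f g : C -> C -> C) z :
  z != 0 -> is_CLSAS G (@witt_bracket C) (lsprod f g z) ->
  forall a b, G a -> G b -> g a b = g b a.
Proof.
move=> z0 [_ H] a b Ga Gb.
have := H _ _ (inW1 Ga) (inW1 Gb) (a+b+z).
rewrite /subW /mulW /witt_bracket /= /scaleW /= /coef !big_cons !big_nil /=.
decide_eq z.
move=> E; apply/eqP; rewrite -subr_eq0; apply/eqP; move/eqP: E; rewrite -subr_eq0 => /eqP E.
rewrite -[RHS]E; ring.
Qed.

Lemma Gclosed (C : numClosedFieldType) (G : C -> Prop) nu :
  free_subgroup_of_rank G nu ->
  [/\ G 0, (forall x y, G x -> G y -> G (x + y)) & (forall x, G x -> G (- x))].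
Proof.
move=> [e [_ He]]; split.
- by apply/He; exists (fun _ => 0); rewrite big1 // => i _; rewrite mulr0z.
- move=> x y /He [zx ->] /He [zy ->]; apply/He; exists (fun i => zx i + zy i).
  by rewrite -big_split /=; apply: eq_bigr => i _; rewrite mulrzDr.
- move=> x /He [zx ->]; apply/He; exists (fun i => - zx i).
  by rewrite -sumrN; apply: eq_bigr => i _; rewrite mulrNz.
Qed.

Lemma lin1 (C : numClosedFieldType) (w k X Y A B : C) :
  w != 0 -> A = B -> w * (X - Y) = k * (A - B) -> X = Y.
Proof.
move=> w0 E; rewrite E subrr mulr0 => /eqP; rewrite mulf_eq0 (negbTE w0) /= subr_eq0.
by move/eqP.
Qed.

Lemma lin2 (C : numClosedFieldType) (w k1 k2 X Y A1 B1 A2 B2 : C) :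
  w != 0 -> A1 = B1 -> A2 = B2 -> w * (X - Y) = k1 * (A1 - B1) + k2 * (A2 - B2) -> X = Y.
Proof.
move=> w0 E1 E2; rewrite E1 E2 !subrr !mulr0 addr0 => /eqP; rewrite mulf_eq0 (negbTE w0) /= subr_eq0.
by move/eqP.
Qed.

Lemma lin3 (C : numClosedFieldType) (w k1 k2 k3 X Y A1 B1 A2 B2 A3 B3 : C) :
  w != 0 -> A1 = B1 -> A2 = B2 -> A3 = B3 ->
  w * (X - Y) = k1 * (A1 - B1) + k2 * (A2 - B2) + k3 * (A3 - B3) -> X = Y.
Proof.
move=> w0 E1 E2 E3; rewrite E1 E2 E3 !subrr !mulr0 !addr0 => /eqP; rewrite mulf_eq0 (negbTE w0) /= subr_eq0.
by move/eqP.
Qed.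

Lemma nzk_lem (C : numClosedFieldType) (z u k : C) : k != 0 -> z != 0 -> u = k * z -> u != 0.
Proof. by move=> k0 z0 ->; rewrite mulf_neq0. Qed.

Ltac knz := first [ exact: oner_neq0 | by rewrite pnatr_eq0 | by rewrite oppr_eq0 oner_neq0
                  | by rewrite oppr_eq0 pnatr_eq0 ].

Ltac nzk z z0 :=
  first [ apply: (@nzk_lem _ z _ 1); [knz|exact z0|ring]
        | apply: (@nzk_lem _ z _ (-1)); [knz|exact z0|ring]
        | apply: (@nzk_lem _ z _ 2); [knz|exact z0|ring]
        | apply: (@nzk_lem _ z _ (-2)); [knz|exact z0|ring]
        | apply: (@nzk_lem _ z _ 3); [knz|exact z0|ring]
        | apply: (@nzk_lem _ z _ (-3)); [knz|exact z0|ring]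
        | apply: (@nzk_lem _ z _ 4); [knz|exact z0|ring]
        | apply: (@nzk_lem _ z _ (-4)); [knz|exact z0|ring]
        | apply: (@nzk_lem _ z _ 5); [knz|exact z0|ring] ].

Ltac fev E f fgen fexc z z0 :=
  repeat match type of E with
  | context [f ?x ?y] =>
     first [ rewrite (fgen x y) in E; [ | solve [assumption] | solve [assumption] | nzk z z0 ]
           | rewrite (fexc x y) in E; [ | solve [assumption] | solve [assumption] | ring ] ]
  end.

Theorem proposition4p3 (C : numClosedFieldType) (G : C -> Prop) (nu : nat)
  (zeta : C) (f g : C -> C -> C) (gamma lambda : C) :
  (1 < nu)%N -> free_subgroup_of_rank G nu ->
  G zeta -> zeta != 0 ->
  is_CLSAS G (@witt_bracket C) (lsprod f g zeta) ->
  G lambda -> gamma != lambda ->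
  (forall a b, G a -> G b ->
     (lambda + a + b != 0 -> f a b = lambda + b) /\
     (lambda + a + b = 0 ->
        f a b = (lambda + b) * (gamma - lambda - b) / (gamma - lambda))) ->
  forall a b, G a -> G b -> g a b = 0.
Proof.
move=> _ Hfree Gz z0 HC GL gL Hf.
have [G0 Gadd Gneg] := Gclosed Hfree.
have Sym := Symz z0 HC.
have S := Sz z0 HC.
have Q := Qz z0 HC.
have fgen : forall x y, G x -> G y -> lambda + x + y != 0 -> f x y = lambda + y.
  by move=> x y Gx Gy; apply: (proj1 (Hf x y Gx Gy)).
have [kap [k0 fexc]] : exists kap, kap != 0 /\ forall x y, G x -> G y ->
    lambda + x + y = 0 -> f x y = lambda + y + x * y * kap.
  exists (gamma - lambda)^-1; split; first by rewrite invr_eq0 subr_eq0.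
  move=> x y Gx Gy e; rewrite (proj2 (Hf x y Gx Gy) e).
  have -> : x = - lambda - y by apply/eqP; rewrite -subr_eq0 -e; apply/eqP; ring.
  have gL0 : gamma - lambda != 0 by rewrite subr_eq0.
  by field.
have fgen2 : forall x y, G x -> G y -> (lambda + x + y = 0 -> x * y = 0) -> f x y = lambda + y.
  move=> x y Gx Gy H; case: (eqVneq (lambda + x + y) 0) => e.
    by rewrite fexc // H // mul0r addr0.
  exact: fgen.
have fx0 : forall x, G x -> f x 0 = lambda.
  by move=> x Gx; rewrite fgen2 ?addr0 // => _; rewrite mulr0.
have f0y : forall y, G y -> f 0 y = lambda + y.
  by move=> y Gy; rewrite fgen2 // => _; rewrite mul0r.
pose h x := g 0 x.
have E1 : forall a c s t, G a -> G c -> a + c = s -> c + zeta = t ->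
    zeta * g a c = h c * f a t - f a c * h s.
  move=> a c s t Ga Gc <- <-.
  have Gac : G (a + c + zeta) by apply: (Gadd _ _ (Gadd _ _ Ga Gc) Gz).
  have := S a 0 c Ga G0 Gc; rewrite !addr0 !add0r (fx0 _ Ga) !f0y //.
  rewrite (Sym a 0) //.
  move=> E; apply: (lin1 (w:=1) (k:=1) (oner_neq0 _) E); rewrite /h; ring.
have R : forall a c s t1 t2, G a -> G c -> a + c = s -> c + zeta = t1 -> a + zeta = t2 ->
    h c * f a t1 - f a c * h s = h a * f c t2 - f c a * h s.
  move=> a c s t1 t2 Ga Gc es e1 e2.
  have A := E1 a c s t1 Ga Gc es e1.
  have B := E1 c a s t2 Gc Ga (etrans (addrC c a) es) e2.
  rewrite (Sym c a) // in B.
  apply: (lin2 (w:=1) (k1:=-1) (k2:=1) (oner_neq0 _) A B); rewrite /h; ring.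
have Qa : forall b c s, G b -> G c -> b + c + zeta = s -> g b c * h s = h c * g b (c + zeta).
  move=> b c s Gb Gc <-.
  have := Q 0 b c G0 Gb Gc; rewrite !add0r !addr0 (Sym b 0) //.
  move=> E; apply: (lin1 (w:=1) (k:=-1) (oner_neq0 _) E); rewrite /h; ring.
suff hz : forall x, G x -> h x = 0.
  move=> a b Ga Gb.
  have := E1 a b (a + b) (b + zeta) Ga Gb erefl erefl.
  have Gab := Gadd _ _ Ga Gb.
  rewrite !hz // => E.
  by apply: (lin1 (w:=zeta) (k:=1) z0 E); ring.

case: (eqVneq (lambda + zeta) 0) => Lz; last first.
  have HA : forall a, G a -> h 0 * f a zeta = (lambda + zeta) * h a.
    move=> a Ga.
    have := R a 0 a zeta (a + zeta) Ga G0 (addr0 a) (add0r zeta) erefl.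
    rewrite (fx0 _ Ga) (f0y _ (Gadd _ _ Ga Gz)) (f0y _ Ga) => E.
    by apply: (lin1 (w:=1) (k:=1) (oner_neq0 _) E); rewrite /h; ring.
  have hgen : forall a, G a -> lambda + a + zeta != 0 -> h a = h 0.
    move=> a Ga na; have := HA a Ga; rewrite fgen // => E.
    by apply: (lin1 (w:=lambda+zeta) (k:=-1) Lz E); rewrite /h; ring.
  have key : forall c, G c -> c != 0 -> lambda + c != 0 -> lambda + c + zeta != 0 ->
      lambda + c + zeta + zeta != 0 -> h 0 = 0.
    move=> c Gc c0 Lc Lcz Lczz.
    pose b := - lambda - c.
    have Gb : G b by apply: Gadd; apply: Gneg.
    have b0 : b != 0 by rewrite /b -opprD oppr_eq0.
    have GmL : G (- lambda) by apply: Gneg.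
    have GmLz : G (- lambda + zeta) by apply: Gadd.
    have Gcz : G (c + zeta) by apply: Gadd.
    have Gczz : G (c + zeta + zeta) by apply: Gadd.
    have Qb : g b c * h (- lambda + zeta) = h c * g b (c + zeta).
      by apply: Qa => //; rewrite /b; ring.
    have Ea : zeta * g b c = h c * f b (c + zeta) - f b c * h (- lambda).
      by apply: E1 => //; rewrite /b; ring.
    have Eb : zeta * g b (c + zeta) = h (c + zeta) * f b (c + zeta + zeta) - f b (c + zeta) * h (- lambda + zeta).
      by apply: E1 => //; rewrite /b; ring.
    have f1 : f b (c + zeta) = lambda + (c + zeta).
      apply: fgen => //. have -> : lambda + b + (c + zeta) = zeta by rewrite /b; ring. exact z0.
    have f2 : f b c = lambda + c + b * c * kap by apply: fexc => //; rewrite /b; ring.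
    have f3 : f b (c + zeta + zeta) = lambda + (c + zeta + zeta).
      apply: fgen => //. have -> : lambda + b + (c + zeta + zeta) = 2 * zeta by rewrite /b; ring.
      by rewrite mulf_neq0 // pnatr_eq0.
    have h1 : h c = h 0 by apply: hgen.
    have h2 : h (- lambda) = h 0.
      apply: hgen => //. have -> : lambda + - lambda + zeta = zeta by ring. exact z0.
    have h3 : h (c + zeta) = h 0 by apply: hgen => //; rewrite addrA.
    have h4 : h (- lambda + zeta) = h 0.
      apply: hgen => //. have -> : lambda + (- lambda + zeta) + zeta = 2 * zeta by ring.
      by rewrite mulf_neq0 // pnatr_eq0.
    rewrite f1 f2 f3 h1 h2 h3 h4 in Ea Eb Qb.
    have : h 0 * h 0 * (b * c * kap) = 0.
      by apply: (lin3 (w:=1) (k1:=h 0) (k2:=-h 0) (k3:=-zeta) (oner_neq0 _) Ea Eb Qb); rewrite /h; ring.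
    move/eqP; rewrite !mulf_eq0 (negbTE b0) (negbTE c0) (negbTE k0) /= orbb orbF.
    by move/eqP.
  have h00 : h 0 = 0.
    have Gmz : G (- zeta) by apply: Gneg.
    case: (eqVneq (lambda + zeta + zeta) 0) => e2.
      have HL : lambda = - zeta - zeta by apply: (lin1 (w:=1) (k:=1) (oner_neq0 _) e2); ring.
      apply: (key (- zeta)) => //; rewrite ?HL; nzk zeta z0.
    case: (eqVneq (lambda + zeta + zeta + zeta) 0) => e3.
      have HL : lambda = - zeta - zeta - zeta by apply: (lin1 (w:=1) (k:=1) (oner_neq0 _) e3); ring.
      apply: (key (- zeta)) => //; rewrite ?HL; nzk zeta z0.
    by apply: (key zeta).
  move=> x Gx; have := HA x Gx; rewrite h00 mul0r => /esym /eqP; rewrite mulf_eq0 (negbTE Lz) /=.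
  by move/eqP.

have HL : lambda = - zeta by apply: (lin1 (w:=1) (k:=1) (oner_neq0 _) Lz); ring.
subst lambda.
have Gm1 : G (- zeta) by apply: Gneg.
have Gz2 : G (2 * zeta) by rewrite (_ : 2 * zeta = zeta + zeta); [apply: Gadd | ring].
have Gz3 : G (3 * zeta) by rewrite (_ : 3 * zeta = 2 * zeta + zeta); [apply: Gadd | ring].
have Gz4 : G (4 * zeta) by rewrite (_ : 4 * zeta = 2 * zeta + 2 * zeta); [apply: Gadd | ring].
have Gm2 : G (- (2 * zeta)) by apply: Gneg.
have Ei := R (2 * zeta) zeta (3 * zeta) (2 * zeta) (3 * zeta) Gz2 Gz ltac:(ring) ltac:(ring) ltac:(ring).
fev Ei f fgen fexc zeta z0.
have c1 : h (3 * zeta) = 2 * h (2 * zeta) - h zeta.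
  by apply: (lin1 (w:=zeta) (k:=1) z0 Ei); rewrite /h; ring.
have Eii := R (2 * zeta) (- zeta) zeta 0 (3 * zeta) Gz2 Gm1 ltac:(ring) ltac:(ring) ltac:(ring).
fev Eii f fgen fexc zeta z0.
have c2 : h (- zeta) = 3 * h zeta - 2 * h (2 * zeta).
  by apply: (lin1 (w:=zeta) (k:=-1) z0 Eii); rewrite /h; ring.
have Eiii := R zeta (- (2 * zeta)) (- zeta) (- zeta) (2 * zeta) Gz Gm2 ltac:(ring) ltac:(ring) ltac:(ring).
fev Eiii f fgen fexc zeta z0.
have z2 : 2 * zeta != 0 by rewrite mulf_neq0 // pnatr_eq0.
have c3 : h (- (2 * zeta)) = 4 * h zeta - 3 * h (2 * zeta).
  by apply: (lin2 (w:=2 * zeta) (k1:=-1) (k2:=3 * zeta) z2 Eiii c2); rewrite /h; ring.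
have Eiv := R zeta (- zeta) 0 0 (2 * zeta) Gz Gm1 ltac:(ring) ltac:(ring) ltac:(ring).
fev Eiv f fgen fexc zeta z0.
have Ev := R (2 * zeta) (- (2 * zeta)) 0 (- zeta) (3 * zeta) Gz2 Gm2 ltac:(ring) ltac:(ring) ltac:(ring).
fev Ev f fgen fexc zeta z0.
rewrite c2 in Eiv. rewrite c3 in Ev.
have w12 : 12 * zeta * zeta * kap != 0 by rewrite !mulf_neq0 // pnatr_eq0.
have a12 : h zeta = h (2 * zeta).
  by apply: (lin2 (w:=12 * zeta * zeta * kap) (k1:=2) (k2:=-1) w12 Eiv Ev); rewrite /h; ring.
have Qvi := Qa (- zeta) (2 * zeta) (2 * zeta) Gm1 Gz2 ltac:(ring).
rewrite (_ : 2 * zeta + zeta = 3 * zeta) in Qvi; last by ring.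
have Ea := E1 (- zeta) (2 * zeta) zeta (3 * zeta) Gm1 Gz2 ltac:(ring) ltac:(ring).
have Eb := E1 (- zeta) (3 * zeta) (2 * zeta) (4 * zeta) Gm1 Gz3 ltac:(ring) ltac:(ring).
fev Ea f fgen fexc zeta z0.
fev Eb f fgen fexc zeta z0.
rewrite c1 -a12 in Qvi Ea Eb.
have a10 : h zeta = 0.
  have : h zeta * h zeta * (2 * zeta * zeta * kap) = 0.
    by apply: (lin3 (w:=1) (k1:=- h zeta) (k2:=h zeta) (k3:=zeta) (oner_neq0 _) Ea Eb Qvi); rewrite /h; ring.
  move/eqP; rewrite !mulf_eq0 (negbTE z0) (negbTE k0) pnatr_eq0 /= orbb !orbF.
  by move/eqP.
have m10 : h (- zeta) = 0 by rewrite c2 -a12 a10; ring.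
have h00 : h 0 = 0.
  rewrite -a12 a10 in Eiv.
  by apply: (lin1 (w:=2 * zeta) (k:=1) z2 Eiv); rewrite /h; ring.
move=> x Gx.
case: (eqVneq x 0) => [-> //|x0].
case: (eqVneq x zeta) => [-> //|xz].
have Gxz : G (x + zeta) by apply: Gadd.
have Gxzz : G (x + zeta + zeta) by apply: Gadd.
have EA := R x zeta (x + zeta) (zeta + zeta) (x + zeta) Gx Gz erefl erefl erefl.
have EB := R (x + zeta) (- zeta) x 0 (x + zeta + zeta) Gxz Gm1 ltac:(ring) ltac:(ring) erefl.
rewrite a10 in EA. rewrite m10 in EB.
have nx : - zeta + x + zeta != 0 by rewrite (_ : - zeta + x + zeta = x) //; ring.
have nx2 : - zeta + zeta + x != 0 by rewrite (_ : - zeta + zeta + x = x) //; ring.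
have nx3 : - zeta + (x + zeta) + - zeta != 0.
  by rewrite (_ : - zeta + (x + zeta) + - zeta = x - zeta) ?subr_eq0 //; ring.
have nx4 : - zeta + - zeta + (x + zeta) != 0.
  by rewrite (_ : - zeta + - zeta + (x + zeta) = x - zeta) ?subr_eq0 //; ring.
have nx5 : - zeta + - zeta + (x + zeta + zeta) != 0.
  by rewrite (_ : - zeta + - zeta + (x + zeta + zeta) = x) //; ring.
rewrite (fgen x zeta) // (fgen zeta x) // in EA.
rewrite (fgen2 zeta (x + zeta)) // in EA; last first.
  move=> e; rewrite (_ : x + zeta = 0) ?mulr0 //.
  by apply: (lin1 (w:=1) (k:=1) (oner_neq0 _) e); ring.
rewrite (fgen (x + zeta) (- zeta)) // (fgen (- zeta) (x + zeta)) // (fgen (- zeta) (x + zeta + zeta)) // in EB.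
have w2 : 2 * zeta * zeta != 0 by rewrite !mulf_neq0 // pnatr_eq0.
by apply: (lin2 (w:=2 * zeta * zeta) (k1:=-(x + zeta)) (k2:=-(x - zeta)) w2 EA EB); rewrite /h; ring.
Qed.
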